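(* The monoid $\Pi_2=\langle a,b,c\mid (ab^ic)^2=1\ (i\geq 1)\rangle$ has context-free word problem.
   Context: For a monoid $M$ with finite generating set $A$, the word problem of $M$ with respect to $A$ is the language $\{u\#v^{\mathrm{rev}} \mid u,v\in A^\ast,\ u=_M v\}$, where $\#\notin A$ and $v^{\mathrm{rev}}$ is the reversal of $v$. $M$ has context-free word problem if this language is context-free (this is independent of the finite generating set). *)

(* Defs.v *)
From HB Require Import structures.
From mathcomp Require Import all_boot.
Set Implicit Arguments. Unset Strict Implicit. Unset Printing Implicit Defensive.

Record cfg (T : eqType) := CFG {
  cfg_N : finType;
  cfg_start : cfg_N;
  cfg_prods : seq (cfg_N * seq (T + cfg_N))
}.

Unset Implicit Arguments.
Inductive derives (T : eqType) (G : cfg T) : seq (T + cfg_N G) -> seq T -> Prop :=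
| der_nil : derives T G [::] [::]
| der_term (t : T) s w : derives T G s w -> derives T G (inl t :: s) (t :: w)
| der_nonterm (X : cfg_N G) rhs s w :
    (X, rhs) \in cfg_prods G -> derives T G (rhs ++ s) w ->
    derives T G (inr X :: s) w.
Arguments derives {T} G _ _.
Set Implicit Arguments.

Definition cfg_lang (T : eqType) (G : cfg T) (w : seq T) : Prop :=
  derives G [:: inr (cfg_start G)] w.

Definition context_free (T : eqType) (L : seq T -> Prop) : Prop :=
  exists G : cfg T, forall w, cfg_lang G w <-> L w.

Inductive pres_eq (A : Type) (R : seq A -> seq A -> Prop) : seq A -> seq A -> Prop :=
| pres_refl u : pres_eq R u u
| pres_sym u v : pres_eq R u v -> pres_eq R v u
| pres_trans u v w : pres_eq R u v -> pres_eq R v w -> pres_eq R u w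
| pres_step u l r v : R l r -> pres_eq R (u ++ l ++ v) (u ++ r ++ v).

(* Word problem of the monoid <A | R> w.r.t. the generating set A, as a
   language over [option A], where [None] plays the role of [#]. *)
Definition word_problem (A : eqType) (R : seq A -> seq A -> Prop)
  (w : seq (option A)) : Prop :=
  exists u v : seq A,
    w = map Some u ++ None :: map Some (rev v) /\ pres_eq R u v.

Inductive gen3 := ga | gb | gc.

Definition gen3_eqb (x y : gen3) : bool :=
  match x, y with ga, ga | gb, gb | gc, gc => true | _, _ => false end.
Lemma gen3_eqP : Equality.axiom gen3_eqb.
Proof. by case; case; constructor. Qed.
HB.instance Definition _ := hasDecEq.Build gen3 gen3_eqP.

Definition abic (i : nat) : seq gen3 := ga :: nseq i gb ++ [:: gc].

Inductive Pi2_rel : seq gen3 -> seq gen3 -> Prop :=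
| Pi2_r (i : nat) : 1 <= i -> Pi2_rel (abic i ++ abic i) [::].

(* Main.v *)
Require Import Defs.
From mathcomp Require Import all_boot.
Set Implicit Arguments. Unset Strict Implicit. Unset Printing Implicit Defensive.

Notation PE := (pres_eq Pi2_rel).

Lemma PE_ctx p q u v : PE u v -> PE (p ++ u ++ q) (p ++ v ++ q).
Proof.
elim=> {u v} [u|u v _ IH|u v w _ IH1 _ IH2|u l r v H].
- exact: pres_refl.
- exact: pres_sym.
- exact: pres_trans IH1 IH2.
- have E : forall m, p ++ (u ++ m ++ v) ++ q = (p ++ u) ++ m ++ (v ++ q).
    by move=> m; rewrite !catA.
  rewrite !E; exact: pres_step.
Qed.

Lemma PE_cat u1 v1 u2 v2 : PE u1 v1 -> PE u2 v2 -> PE (u1 ++ u2) (v1 ++ v2).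
Proof.
move=> H1 H2; apply: (@pres_trans _ _ _ (v1 ++ u2)).
- by have := PE_ctx [::] u2 H1; rewrite /=.
- by have := PE_ctx v1 [::] H2; rewrite !cats0.
Qed.

Lemma PE_rel i : 0 < i -> PE (abic i ++ abic i) [::].
Proof.
move=> Hi; have := @pres_step _ Pi2_rel [::] _ _ [::] (Pi2_r Hi).
by rewrite /= !cats0.
Qed.

(* reversed stack *)
Fixpoint nb (t : seq gen3) : nat := if t is gb :: t' then (nb t').+1 else 0.

Definition detect (s : seq gen3) : option (seq gen3) :=
  match s with
  | gc :: t =>
    let j := nb t in
    if 0 < j then
      match drop j t with
      | ga :: gc :: t2 =>
          if nb t2 == j then (match drop j t2 with ga :: r => Some r | _ => None end)
          else None
      | _ => None
      end
    else None
  | _ => None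
  end.

Definition push (x : gen3) (s : seq gen3) :=
  if detect (x :: s) is Some r then r else x :: s.

Definition pf s x := push x s.
Definition nf u := foldl pf [::] u.

Definition pat i r := gc :: nseq i gb ++ ga :: gc :: nseq i gb ++ ga :: r.

Lemma nb_split t : t = nseq (nb t) gb ++ drop (nb t) t.
Proof. by elim: t => //= -[] t IH //=; rewrite -IH. Qed.

Lemma nb_nseq i s : nb (nseq i gb ++ ga :: s) = i.
Proof. by elim: i => //= i ->. Qed.

Lemma drop_nseq i (s : seq gen3) : drop i (nseq i gb ++ s) = s.
Proof. by elim: i => [|i IH] /=; rewrite ?drop0. Qed.

Lemma detect_pat i r : 0 < i -> detect (pat i r) = Some r.
Proof.
move=> Hi; rewrite /pat /= nb_nseq Hi drop_nseq nb_nseq eqxx drop_nseq //.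
Qed.


Lemma detect_Some s r : detect s = Some r -> exists2 i, 0 < i & s = pat i r.
Proof.
case: s => // -[] // t /=.
case: ifP => // Hj.
have Et := nb_split t.
case Ed: (drop (nb t) t) => [|[] [|[] t2]] //.
case: eqP => // Hn.
have Et2 := nb_split t2; rewrite Hn in Et2.
case Ed2: (drop (nb t) t2) => [|[] r'] // [<-]; exists (nb t) => //.
by rewrite /pat {1}Et Ed {1}Et2 Ed2.
Qed.

Lemma nseq_ga_inj i j (s t : seq gen3) :
  nseq i gb ++ ga :: s = nseq j gb ++ ga :: t -> i = j /\ s = t.
Proof.
elim: i j => [|i IH] [|j] //=; first by case.
by case=> /IH [-> ->].
Qed.

Definition Irr s := forall k, detect (drop k s) = None.

Lemma Irr_nil : Irr [::].
Proof. by []. Qed.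

Lemma Irr_push x s : Irr s -> Irr (push x s).
Proof.
move=> Hs; rewrite /push; case E: (detect (x :: s)) => [r|].
- case: (detect_Some E) => i _; rewrite /pat; case=> _ Es.
  have Es' : s = (nseq i gb ++ ga :: gc :: nseq i gb ++ [:: ga]) ++ r.
    by rewrite Es -catA /= -catA.
  move=> k; have := Hs (k + size (nseq i gb ++ ga :: gc :: nseq i gb ++ [:: ga])).
  by rewrite Es' drop_cat ltnNge leq_addl /= addnK.
- by case=> [|k] /=.
Qed.

Lemma Irr_fold s u : Irr s -> Irr (foldl pf s u).
Proof. by elim: u s => //= x u IH s Hs; apply: IH; apply: Irr_push. Qed.

Lemma nseq_rcons T (x : T) i : nseq i.+1 x = rcons (nseq i x) x.
Proof. by elim: i => //= i ->. Qed.

Lemma fold_bs i s : foldl pf s (nseq i gb) = nseq i gb ++ s.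
Proof.
elim: i => // i IH; rewrite nseq_rcons foldl_rcons IH.
by rewrite /pf /push /= -nseq_rcons.
Qed.

Lemma fold_abic i s : foldl pf s (abic i) = push gc (nseq i gb ++ ga :: s).
Proof. by rewrite /abic /= foldl_cat fold_bs. Qed.

Lemma fold_lhs i s : 0 < i -> Irr s -> foldl pf s (abic i ++ abic i) = s.
Proof.
move=> Hi Hs; rewrite foldl_cat (fold_abic i s) /push.
case E: (detect _) => [r|].
- case: (detect_Some E) => j _; rewrite /pat; case=> /nseq_ga_inj [<- Es].
  rewrite fold_abic /push; case E2: (detect _) => [r'|].
  + case: (detect_Some E2) => j' _; rewrite /pat; case=> /nseq_ga_inj [<- Er].
    have := Hs 0; rewrite drop0 Es Er -/(pat i r') detect_pat //.
  + by rewrite Es.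
- rewrite fold_abic /push -/(pat i s) detect_pat //.
Qed.

Lemma PE_nf u v : PE u v -> nf u = nf v.
Proof.
elim=> {u v} [//|u v _ -> //|u v w _ -> _ -> //|u l r v [i Hi]].
rewrite /nf !foldl_cat -(foldl_cat pf (foldl pf [::] u) (abic i) (abic i)) fold_lhs //; exact: Irr_fold.
Qed.

Definition sym := (option gen3 + 'I_5)%type.
Definition nS : 'I_5 := @Ordinal 5 0 isT.
Definition nD : 'I_5 := @Ordinal 5 1 isT.
Definition nK : 'I_5 := @Ordinal 5 2 isT.
Definition nR : 'I_5 := @Ordinal 5 3 isT.
Definition nQ : 'I_5 := @Ordinal 5 4 isT.
Definition tm (x : gen3) : sym := inl (Some x).

Definition rhsx x : seq sym := [:: inr nD; tm x; inr nS; tm x; inr nR].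

Definition prods : seq ('I_5 * seq sym) := [::
 (nS, rhsx ga); (nS, rhsx gb); (nS, rhsx gc);
 (nS, [:: inr nD; inl None; inr nR]);
 (nD, [::]); (nD, [:: inr nD; inr nD]);
 (nD, [:: tm ga; inr nD; inr nK; inr nD; tm gc]);
 (nK, [:: tm gb; inr nD; tm gc; inr nD; tm ga; inr nD; tm gb]);
 (nK, [:: tm gb; inr nD; inr nK; inr nD; tm gb]);
 (nR, [::]); (nR, [:: inr nR; inr nR]);
 (nR, [:: tm gc; inr nR; inr nQ; inr nR; tm ga]);
 (nQ, [:: tm gb; inr nR; tm ga; inr nR; tm gc; inr nR; tm gb]);
 (nQ, [:: tm gb; inr nR; inr nQ; inr nR; tm gb]) ].

Definition G : cfg (option gen3) := @CFG _ 'I_5 nS prods.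

Lemma test : (nD, [:: tm ga; inr nD; inr nK; inr nD; tm gc]) \in prods.
Proof. exact: isT. Qed.

Lemma der_app s1 s2 w1 w2 : derives G s1 w1 -> derives G s2 w2 ->
  derives G (s1 ++ s2) (w1 ++ w2).
Proof.
move=> H1 H2; elim: H1 => //= [t s w _ IH|X rhs s w Hp _ IH].
- exact: der_term.
- apply: (@der_nonterm _ G X rhs (s ++ s2) (w ++ w2) Hp); by rewrite catA.
Qed.

Lemma der_prod X rhs w : (X, rhs) \in prods -> derives G rhs w ->
  derives G [:: inr X] w.
Proof. by move=> Hp H; apply: (@der_nonterm _ G X rhs [::] w Hp); rewrite cats0. Qed.

Lemma der_n X s w1 w2 : derives G [:: inr X] w1 -> derives G s w2 ->
  derives G (inr X :: s) (w1 ++ w2).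
Proof. exact: (@der_app [:: inr X] s). Qed.

Lemma der_t x s w : derives G s w -> derives G (tm x :: s) (Some x :: w).
Proof. exact: der_term. Qed.

Lemma der_nil' : derives G [::] [::].
Proof. exact: der_nil. Qed.

Definition Dw e := derives G [:: inr nD] (map Some e) /\
                   derives G [:: inr nR] (map Some (rev e)).
Definition Kw k := derives G [:: inr nK] (map Some k) /\
                   derives G [:: inr nQ] (map Some (rev k)).

Lemma Dw_nil : Dw [::].
Proof. by split; apply: der_prod der_nil'. Qed.

Lemma Dw_cat e1 e2 : Dw e1 -> Dw e2 -> Dw (e1 ++ e2).
Proof.
move=> [H1 H1'] [H2 H2']; split.
- apply: (@der_prod nD [:: inr nD; inr nD]) => //.
  rewrite map_cat -(cats0 (map Some e2)); apply: der_n H1 (der_n H2 der_nil').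
- apply: (@der_prod nR [:: inr nR; inr nR]) => //.
  rewrite rev_cat map_cat -(cats0 (map Some (rev e1))); apply: der_n H2' (der_n H1' der_nil').
Qed.

Ltac revn := rewrite ?(rev_cons, rev_cat) /= -?cats1 -?catA /= -?catA /=.

Lemma Dw_lhs e1 k e2 : Dw e1 -> Kw k -> Dw e2 -> Dw (ga :: e1 ++ k ++ e2 ++ [:: gc]).
Proof.
move=> [H1 H1'] [Hk Hk'] [H2 H2']; split.
- apply: (@der_prod nD [:: tm ga; inr nD; inr nK; inr nD; tm gc]) => //.
  rewrite /= !(map_cat, map_cons) /=.
  exact: der_t _ (der_n H1 (der_n Hk (der_n H2 (der_t _ der_nil')))).
- apply: (@der_prod nR [:: tm gc; inr nR; inr nQ; inr nR; tm ga]) => //.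
  have -> : rev (ga :: e1 ++ k ++ e2 ++ [:: gc]) = gc :: rev e2 ++ rev k ++ rev e1 ++ [:: ga].
    by revn.
  rewrite /= !(map_cat, map_cons) /=.
  exact: der_t _ (der_n H2' (der_n Hk' (der_n H1' (der_t _ der_nil')))).
Qed.

Lemma Kw_base e1 e2 e3 : Dw e1 -> Dw e2 -> Dw e3 ->
  Kw (gb :: e1 ++ gc :: e2 ++ ga :: e3 ++ [:: gb]).
Proof.
move=> [H1 H1'] [H2 H2'] [H3 H3']; split.
- apply: (@der_prod nK [:: tm gb; inr nD; tm gc; inr nD; tm ga; inr nD; tm gb]) => //.
  rewrite /= !(map_cat, map_cons) /=.
  exact: der_t _ (der_n H1 (der_t _ (der_n H2 (der_t _ (der_n H3 (der_t _ der_nil')))))).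
- apply: (@der_prod nQ [:: tm gb; inr nR; tm ga; inr nR; tm gc; inr nR; tm gb]) => //.
  have -> : rev (gb :: e1 ++ gc :: e2 ++ ga :: e3 ++ [:: gb]) =
            gb :: rev e3 ++ ga :: rev e2 ++ gc :: rev e1 ++ [:: gb].
    by revn.
  rewrite /= !(map_cat, map_cons) /=.
  exact: der_t _ (der_n H3' (der_t _ (der_n H2' (der_t _ (der_n H1' (der_t _ der_nil')))))).
Qed.

Lemma Kw_step e1 k e2 : Dw e1 -> Kw k -> Dw e2 -> Kw (gb :: e1 ++ k ++ e2 ++ [:: gb]).
Proof.
move=> [H1 H1'] [Hk Hk'] [H2 H2']; split.
- apply: (@der_prod nK [:: tm gb; inr nD; inr nK; inr nD; tm gb]) => //.
  rewrite /= !(map_cat, map_cons) /=.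
  exact: der_t _ (der_n H1 (der_n Hk (der_n H2 (der_t _ der_nil')))).
- apply: (@der_prod nQ [:: tm gb; inr nR; inr nQ; inr nR; tm gb]) => //.
  have -> : rev (gb :: e1 ++ k ++ e2 ++ [:: gb]) = gb :: rev e2 ++ rev k ++ rev e1 ++ [:: gb].
    by revn.
  rewrite /= !(map_cat, map_cons) /=.
  exact: der_t _ (der_n H2' (der_n Hk' (der_n H1' (der_t _ der_nil')))).
Qed.

Inductive Emb : seq gen3 -> seq gen3 -> Prop :=
| emb_nil e : Dw e -> Emb e [::]
| emb_cons e x u w : Dw e -> Emb u w -> Emb (e ++ x :: u) (x :: w).

Lemma emb_inv_nil u : Emb u [::] -> Dw u.
Proof. by move=> H; inversion H. Qed.

Lemma emb_inv_cons u x w : Emb u (x :: w) ->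
  exists e u', [/\ u = e ++ x :: u', Dw e & Emb u' w].
Proof. by move=> H; inversion H; subst; exists e, u0. Qed.

Lemma emb_app_D u w e : Emb u w -> Dw e -> Emb (u ++ e) w.
Proof.
elim=> [e0 H0|e0 x u0 w0 H0 _ IH] He.
- by apply: emb_nil; apply: Dw_cat.
- by rewrite -catA /=; apply: emb_cons => //; apply: IH.
Qed.

Lemma emb_snoc u w x e : Emb u w -> Dw e -> Emb (u ++ x :: e) (rcons w x).
Proof.
elim=> [e0 H0|e0 y u0 w0 H0 _ IH] He.
- by apply: emb_cons => //; apply: emb_nil.
- by rewrite -catA /=; apply: emb_cons => //; apply: IH.
Qed.

Lemma emb_split u w1 w2 : Emb u (w1 ++ w2) ->
  exists U1 U2, [/\ u = U1 ++ U2, Emb U1 w1 & Emb U2 w2].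
Proof.
elim: w1 u => [|x w1 IH] u /=.
- by move=> H; exists [::], u; split => //; apply: emb_nil Dw_nil.
- case/emb_inv_cons => e [u' [-> He /IH [U1 [U2 [-> H1 H2]]]]].
  exists (e ++ x :: U1), U2; split => //; first by rewrite -catA.
  exact: emb_cons.
Qed.

Lemma KL i U : 0 < i -> Emb U (nseq i gb ++ gc :: ga :: nseq i gb) ->
  exists e1 k e2, [/\ U = e1 ++ k ++ e2, Dw e1, Kw k & Dw e2].
Proof.
elim: i U => // -[|i] IH U _ H.
- move: H => /= /emb_inv_cons [e1 [U1 [-> H1]]].
  move=> /emb_inv_cons [e2 [U2 [-> H2]]].
  move=> /emb_inv_cons [e3 [U3 [-> H3]]].
  move=> /emb_inv_cons [e4 [U4 [-> H4]]].
  move=> /emb_inv_nil H5.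
  exists e1, (gb :: e2 ++ gc :: e3 ++ ga :: e4 ++ [:: gb]), U4; split => //.
  + by do 4 rewrite /= -?catA.
  + exact: Kw_base.
- have E : nseq i.+2 gb ++ gc :: ga :: nseq i.+2 gb =
           gb :: (nseq i.+1 gb ++ gc :: ga :: nseq i.+1 gb) ++ [:: gb].
    by rewrite -catA /= cats1 -nseq_rcons.
  move: H; rewrite E => /emb_inv_cons [e1 [U4 [-> H1]]].
  case/emb_split => V1 [V2 [-> HV1]].
  case/emb_inv_cons => f [g [-> Hf /emb_inv_nil Hg]].
  case: (IH V1 isT HV1) => e' [k' [e'' [-> H' Hk' H'']]].
  exists e1, (gb :: e' ++ k' ++ (e'' ++ f) ++ [:: gb]), g; split => //.
  + by do 4 rewrite /= -?catA.
  + by apply: Kw_step => //; apply: Dw_cat.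
Qed.

Lemma lhsD i U : 0 < i -> Emb U (ga :: nseq i gb ++ gc :: ga :: nseq i gb) ->
  Dw (U ++ [:: gc]).
Proof.
move=> Hi /emb_inv_cons [e0 [U3 [-> H0 /(KL Hi) [e1 [k [e2 [-> H1 Hk H2]]]]]]].
have -> : (e0 ++ ga :: e1 ++ k ++ e2) ++ [:: gc] = e0 ++ (ga :: e1 ++ k ++ e2 ++ [:: gc]).
  by do 3 rewrite /= -?catA.
by apply: Dw_cat => //; apply: Dw_lhs.
Qed.

Lemma Emb_nf u : Emb u (rev (nf u)).
Proof.
elim/last_ind: u => [|u x IH]; first exact: emb_nil Dw_nil.
rewrite /nf foldl_rcons -/(nf u) {1}/pf /push.
case E: (detect (x :: nf u)) => [r|].
- case: (detect_Some E) => i Hi; rewrite /pat; case=> Ex En.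
  have Er : rev (nf u) = rev r ++ (ga :: nseq i gb ++ gc :: ga :: nseq i gb).
    rewrite En !(rev_cons, rev_cat) rev_nseq /=.
    by do 4 rewrite -?cats1 -?catA /=.
  move: IH; rewrite Er => /emb_split [U1 [U2 [-> H1 H2]]].
  rewrite Ex -cats1 -catA; exact: emb_app_D H1 (lhsD Hi H2).
- rewrite rev_cons -[rcons u x]cats1; exact: emb_snoc IH Dw_nil.
Qed.

Lemma der_S u v w : Emb u w -> Emb v w ->
  derives G [:: inr nS] (map Some u ++ None :: map Some (rev v)).
Proof.
move=> H; elim: H v => [e [He1 He2]|e x u0 w0 [He1 He2] _ IH] v.
- move/emb_inv_nil => [Hv1 Hv2].
  apply: (@der_prod nS [:: inr nD; inl None; inr nR]) => //.
  rewrite -(cats0 (map Some (rev v))).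
  exact: der_n He1 (der_term _ _ None _ _ (der_n Hv2 der_nil')).
- case/emb_inv_cons => f [v' [-> [Hf1 Hf2] Hv']].
  have IH' := IH v' Hv'.
  apply: (@der_prod nS (rhsx x)); first by case: x.
  have -> : map Some (e ++ x :: u0) ++ None :: map Some (rev (f ++ x :: v')) =
     map Some e ++ Some x :: (map Some u0 ++ None :: map Some (rev v')) ++
       Some x :: map Some (rev f) ++ [::].
    rewrite cats0 rev_cat rev_cons -cats1 !map_cat /= -!catA /=.
    done.
  exact: der_n He1 (der_t x (der_n IH' (der_t x (der_n Hf2 der_nil')))).
Qed.

Definition bca i := nseq i gb ++ gc :: ga :: nseq i gb.

Definition SemD (w : seq (option gen3)) := exists e, w = map Some e /\ PE e [::].
Definition SemR (w : seq (option gen3)) := exists e, w = map Some (rev e) /\ PE e [::].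
Definition SemK (w : seq (option gen3)) :=
  exists k i, [/\ 0 < i, w = map Some k & PE k (bca i)].
Definition SemQ (w : seq (option gen3)) :=
  exists k i, [/\ 0 < i, w = map Some (rev k) & PE k (bca i)].

Definition Sem (X : 'I_5) : seq (option gen3) -> Prop :=
  match nat_of_ord X with
  | 0 => word_problem Pi2_rel
  | 1 => SemD
  | 2 => SemK
  | 3 => SemR
  | _ => SemQ
  end.

Inductive SemSeq : seq sym -> seq (option gen3) -> Prop :=
| ss_nil : SemSeq [::] [::]
| ss_t t s w : SemSeq s w -> SemSeq (inl t :: s) (t :: w)
| ss_n X s w1 w2 : Sem X w1 -> SemSeq s w2 -> SemSeq (inr X :: s) (w1 ++ w2).

Lemma ss_inv_t t s w : SemSeq (inl t :: s) w -> exists2 w', w = t :: w' & SemSeq s w'.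
Proof. by move=> H; inversion H; subst; exists w0. Qed.

Lemma ss_inv_n X s w : SemSeq (inr X :: s) w ->
  exists w1 w2, [/\ w = w1 ++ w2, Sem X w1 & SemSeq s w2].
Proof. by move=> H; inversion H; subst; exists w1, w2. Qed.

Lemma ss_inv_nil w : SemSeq [::] w -> w = [::].
Proof. by move=> H; inversion H. Qed.

Lemma ss_cat s1 s2 w1 w2 : SemSeq s1 w1 -> SemSeq s2 w2 -> SemSeq (s1 ++ s2) (w1 ++ w2).
Proof.
elim=> //= [t s w _ IH|X s w0 w3 HX _ IH] H2.
- exact/ss_t/IH.
- rewrite -catA; exact/ss_n/IH.
Qed.

Lemma ss_split s1 s2 w : SemSeq (s1 ++ s2) w ->
  exists w1 w2, [/\ w = w1 ++ w2, SemSeq s1 w1 & SemSeq s2 w2].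
Proof.
elim: s1 w => [|[t|X] s1 IH] w /=.
- by move=> H; exists [::], w; split => //; exact: ss_nil.
- case/ss_inv_t => w' -> /IH [w1 [w2 [-> H1 H2]]].
  by exists (t :: w1), w2; split => //; apply: ss_t.
- case/ss_inv_n => w0 [w' [-> HX /IH [w1 [w2 [-> H1 H2]]]]].
  exists (w0 ++ w1), w2; split; [by rewrite catA | exact: ss_n | by []].
Qed.

Lemma PE_pieces (a b : seq gen3) : PE a [::] -> PE b [::] -> PE a b.
Proof. move=> Ha Hb; exact: pres_trans Ha (pres_sym Hb). Qed.

Fixpoint InP (T : Type) (x : T) (s : seq T) : Prop :=
  if s is y :: s' then y = x \/ InP x s' else False.

Lemma inP' (T : eqType) (x : T) s : x \in s -> InP x s.
Proof. by elim: s => //= y s IH; rewrite inE => /orP [/eqP ->|/IH]; auto. Qed.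

Ltac mapn := rewrite /= ?(map_cat, map_cons) /=.

Lemma PE_tr (a b c : seq gen3) : PE a b -> b = c -> PE c [::] -> PE a [::].
Proof. by move=> H E H2; rewrite E in H; exact: pres_trans H H2. Qed.

Lemma lhs_eq i : [:: ga] ++ [::] ++ bca i ++ [::] ++ [:: gc] = abic i ++ abic i.
Proof. by rewrite /bca /abic /=; do 3 rewrite -?catA /=. Qed.

Lemma bca_S i : [:: gb] ++ [::] ++ bca i ++ [::] ++ [:: gb] = bca i.+1.
Proof. by rewrite /bca /= -catA /= cats1 -nseq_rcons. Qed.

Lemma snd_S x w0 w3 w6 : SemD w0 -> word_problem Pi2_rel w3 -> SemR w6 ->
  word_problem Pi2_rel (w0 ++ Some x :: w3 ++ Some x :: w6 ++ [::]).
Proof.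
move=> [e [-> He]] [u [v [-> Huv]]] [f [-> Hf]].
exists (e ++ x :: u), (f ++ x :: v); split.
- rewrite cats0 rev_cat rev_cons -cats1 !map_cat /=; by do 3 rewrite -?catA /=.
- exact: (PE_cat (PE_pieces He Hf) (PE_cat (@pres_refl _ _ [:: x]) Huv)).
Qed.

Lemma snd_Sb w0 w3 : SemD w0 -> SemR w3 -> word_problem Pi2_rel (w0 ++ None :: w3 ++ [::]).
Proof.
move=> [e [-> He]] [f [-> Hf]]; exists e, f; split; first by rewrite cats0.
exact: PE_pieces.
Qed.

Lemma snd_D0 : SemD [::].
Proof. by exists [::]; split => //; exact: pres_refl. Qed.

Lemma snd_DD w0 w2 : SemD w0 -> SemD w2 -> SemD (w0 ++ w2 ++ [::]).
Proof.
move=> [e1 [-> H1]] [e2 [-> H2]]; exists (e1 ++ e2); split; first by rewrite cats0 map_cat.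
exact: (PE_cat H1 H2).
Qed.

Lemma snd_Dl w1 w3 w5 : SemD w1 -> SemK w3 -> SemD w5 ->
  SemD (Some ga :: w1 ++ w3 ++ w5 ++ [:: Some gc]).
Proof.
move=> [e1 [-> H1]] [k [i [Hi -> Hk]]] [e2 [-> H2]].
exists (ga :: e1 ++ k ++ e2 ++ [:: gc]); split; first by mapn.
apply: PE_tr (lhs_eq i) (PE_rel Hi).
exact: (PE_cat (@pres_refl _ _ [:: ga]) (PE_cat H1 (PE_cat Hk (PE_cat H2 (@pres_refl _ _ [:: gc]))))).
Qed.

Lemma snd_Kb w1 w4 w7 : SemD w1 -> SemD w4 -> SemD w7 ->
  SemK (Some gb :: w1 ++ Some gc :: w4 ++ Some ga :: w7 ++ [:: Some gb]).
Proof.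
move=> [e1 [-> H1]] [e2 [-> H2]] [e3 [-> H3]].
exists (gb :: e1 ++ gc :: e2 ++ ga :: e3 ++ [:: gb]), 1; split => //; first by mapn.
exact: (PE_cat (@pres_refl _ _ [:: gb]) (PE_cat H1 (PE_cat (@pres_refl _ _ [:: gc])
  (PE_cat H2 (PE_cat (@pres_refl _ _ [:: ga]) (PE_cat H3 (@pres_refl _ _ [:: gb]))))))).
Qed.

Lemma snd_Ks w1 w3 w5 : SemD w1 -> SemK w3 -> SemD w5 ->
  SemK (Some gb :: w1 ++ w3 ++ w5 ++ [:: Some gb]).
Proof.
move=> [e1 [-> H1]] [k [i [Hi -> Hk]]] [e2 [-> H2]].
exists (gb :: e1 ++ k ++ e2 ++ [:: gb]), i.+1; split => //; first by mapn.
rewrite -bca_S.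
exact: (PE_cat (@pres_refl _ _ [:: gb]) (PE_cat H1 (PE_cat Hk (PE_cat H2 (@pres_refl _ _ [:: gb]))))).
Qed.

Lemma snd_R0 : SemR [::].
Proof. by exists [::]; split => //; exact: pres_refl. Qed.

Lemma snd_RR w0 w2 : SemR w0 -> SemR w2 -> SemR (w0 ++ w2 ++ [::]).
Proof.
move=> [e1 [-> H1]] [e2 [-> H2]]; exists (e2 ++ e1); split.
  by rewrite cats0 rev_cat map_cat.
exact: (PE_cat H2 H1).
Qed.

Lemma snd_Rl w1 w3 w5 : SemR w1 -> SemQ w3 -> SemR w5 ->
  SemR (Some gc :: w1 ++ w3 ++ w5 ++ [:: Some ga]).
Proof.
move=> [e1 [-> H1]] [k [i [Hi -> Hk]]] [e2 [-> H2]].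
exists (ga :: e2 ++ k ++ e1 ++ [:: gc]); split.
  have -> : rev (ga :: e2 ++ k ++ e1 ++ [:: gc]) = gc :: rev e1 ++ rev k ++ rev e2 ++ [:: ga].
    by revn.
  by mapn.
apply: PE_tr (lhs_eq i) (PE_rel Hi).
exact: (PE_cat (@pres_refl _ _ [:: ga]) (PE_cat H2 (PE_cat Hk (PE_cat H1 (@pres_refl _ _ [:: gc]))))).
Qed.

Lemma snd_Qb w1 w4 w7 : SemR w1 -> SemR w4 -> SemR w7 ->
  SemQ (Some gb :: w1 ++ Some ga :: w4 ++ Some gc :: w7 ++ [:: Some gb]).
Proof.
move=> [e1 [-> H1]] [e2 [-> H2]] [e3 [-> H3]].
exists (gb :: e3 ++ gc :: e2 ++ ga :: e1 ++ [:: gb]), 1; split => //.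
  have -> : rev (gb :: e3 ++ gc :: e2 ++ ga :: e1 ++ [:: gb]) =
    gb :: rev e1 ++ ga :: rev e2 ++ gc :: rev e3 ++ [:: gb] by revn.
  by mapn.
exact: (PE_cat (@pres_refl _ _ [:: gb]) (PE_cat H3 (PE_cat (@pres_refl _ _ [:: gc])
  (PE_cat H2 (PE_cat (@pres_refl _ _ [:: ga]) (PE_cat H1 (@pres_refl _ _ [:: gb]))))))).
Qed.

Lemma snd_Qs w1 w3 w5 : SemR w1 -> SemQ w3 -> SemR w5 ->
  SemQ (Some gb :: w1 ++ w3 ++ w5 ++ [:: Some gb]).
Proof.
move=> [e1 [-> H1]] [k [i [Hi -> Hk]]] [e2 [-> H2]].
exists (gb :: e2 ++ k ++ e1 ++ [:: gb]), i.+1; split => //.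
  have -> : rev (gb :: e2 ++ k ++ e1 ++ [:: gb]) =
    gb :: rev e1 ++ rev k ++ rev e2 ++ [:: gb] by revn.
  by mapn.
rewrite -bca_S.
exact: (PE_cat (@pres_refl _ _ [:: gb]) (PE_cat H2 (PE_cat Hk (PE_cat H1 (@pres_refl _ _ [:: gb]))))).
Qed.

Ltac ssinv H :=
  match type of H with
  | SemSeq (inl _ :: _) _ =>
      let w := fresh "w" in let H' := fresh "H" in
      case: (ss_inv_t H) => w -> H'; clear H; ssinv H'
  | SemSeq (inr _ :: _) _ =>
      let w1 := fresh "w" in let w2 := fresh "w" in
      let S := fresh "S" in let H' := fresh "H" in
      case: (ss_inv_n H) => w1 [w2 [-> S H']]; clear H; ssinv H'
  | SemSeq [::] _ => rewrite (ss_inv_nil H); clear H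
  end.

Lemma prod_sound X rhs w : (X, rhs) \in prods -> SemSeq rhs w -> Sem X w.
Proof.
move/inP'; rewrite /prods /rhsx /tm /=.
case=> [[<- <-]|[[<- <-]|[[<- <-]|[[<- <-]|[[<- <-]|[[<- <-]|[[<- <-]|[[<- <-]|[[<- <-]|[[<- <-]|[[<- <-]|[[<- <-]|[[<- <-]|[[<- <-]|[]]]]]]]]]]]]]]] => H; ssinv H.
all: first [ apply: snd_S; assumption | apply: snd_Sb; assumption
  | exact: snd_D0 | apply: snd_DD; assumption | apply: snd_Dl; assumption
  | apply: snd_Kb; assumption | apply: snd_Ks; assumption
  | exact: snd_R0 | apply: snd_RR; assumption | apply: snd_Rl; assumption
  | apply: snd_Qb; assumption | apply: snd_Qs; assumption ].
Qed.

Lemma sound s w : derives G s w -> SemSeq s w.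
Proof.
elim=> [|t s0 w0 _ IH|X rhs s0 w0 Hp _ IH].
- exact: ss_nil.
- exact: ss_t.
- case: (ss_split IH) => w1 [w2 [-> H1 H2]].
  exact: ss_n (prod_sound Hp H1) H2.
Qed.

Theorem mainTheorem3 : context_free (word_problem Pi2_rel).
Proof.
exists G => w; split.
- move=> H; have := sound H.
  case/ss_inv_n => w1 [w2 [-> HS /ss_inv_nil ->]]; rewrite cats0; exact: HS.
- case=> u [v [-> Huv]].
  have Hu := Emb_nf u; have Hv := Emb_nf v.
  rewrite (PE_nf Huv) in Hu.
  exact: der_S Hu Hv.
Qed.
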